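(* Let $\Lambda=(\mathcal{L}\subset\mathbb{R}^s,\mathbb{R}^n)$ be a generic cut-and-project scheme with associated matrix $L$ and with self-similarity $A\in\mathbb{R}^{n\times n}$, and let $B\in\mathbb{R}^{(s-n)\times(s-n)}$ and $C\in\mathbb{Z}^{s\times s}$ satisfy $\begin{pmatrix}A&O\\O&B\end{pmatrix}L=LC$. Then for every polynomial $p\in\mathbb{Z}[X]$, $p(A)=O$ if and only if $p(B)=O$.
   Context: A lattice $\mathcal{L}\subset\mathbb{R}^s$ is $\{L\mathbf{r}:\mathbf{r}\in\mathbb{Z}^s\}$ for a non-singular $L\in\mathbb{R}^{s\times s}$. For $1\le n<s$ the scheme $(\mathcal{L}\subset\mathbb{R}^s,\mathbb{R}^n)$ has projections $\pi_\parallel(\mathbf{x})=(x_1,\dots,x_n)^\top$, $\pi_\perp(\mathbf{x})=(x_{n+1},\dots,x_s)^\top$; it is generic if $\pi_\parallel|_{\mathcal{L}}$, $\pi_\perp|_{\mathcal{L}}$ are injective and $\pi_\perp(\mathcal{L})$ is dense in $\mathbb{R}^{s-n}$. $A$ is a self-similarity of a generic scheme if $A\pi_\parallel(\mathcal{L})\subset\pi_\parallel(\mathcal{L})$ and there exist $C\in\mathbb{Z}^{s\times s}$, $B$ real with $\begin{pmatrix}A&O\\O&B\end{pmatrix}L=LC$. *)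

(* Defs.v *)
From HB Require Import structures.
From mathcomp Require Import all_boot all_order all_algebra.
From mathcomp Require Import all_classical all_reals all_analysis.
Import numFieldNormedType.Exports.
Set Implicit Arguments. Unset Strict Implicit. Unset Printing Implicit Defensive.
Import Order.TTheory GRing.Theory Num.Theory.
Local Open Scope ring_scope.
Local Open Scope classical_set_scope.

(* Ambient space R^s with s = n + m (m = s - n), points are column vectors.
   pi_par x = first n coordinates, pi_perp x = last m coordinates. *)

Definition intmx (R : realType) (k l : nat) (M : 'M[int]_(k, l)) : 'M[R]_(k, l) :=
  map_mx (fun z : int => z%:~R) M.

Definition lattice (R : realType) (s : nat) (L : 'M[R]_s) : set 'cV[R]_s :=
  [set x | exists r : 'cV[int]_s, x = L *m intmx R r].

Definition pi_par (R : realType) (n m : nat) (x : 'cV[R]_(n + m)) : 'cV[R]_n :=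
  usubmx x.
Definition pi_perp (R : realType) (n m : nat) (x : 'cV[R]_(n + m)) : 'cV[R]_m :=
  dsubmx x.

Definition generic_cps (R : realType) (n m : nat) (L : 'M[R]_(n + m)) : Prop :=
  (0 < n)%N /\ (0 < m)%N /\ L \in unitmx /\
  (forall x y, lattice L x -> lattice L y -> pi_par x = pi_par y :> 'cV[R]_n -> x = y) /\
  (forall x y, lattice L x -> lattice L y -> pi_perp x = pi_perp y :> 'cV[R]_m -> x = y) /\
  @dense ('cV[R]_m : topologicalType) (@pi_perp R n m @` lattice L).

Definition self_similarity (R : realType) (n m : nat) (L : 'M[R]_(n + m))
    (A : 'M[R]_n) : Prop :=
  (fun x => A *m x) @` (@pi_par R n m @` lattice L) `<=` @pi_par R n m @` lattice L /\
  exists (C : 'M[int]_(n + m)) (B : 'M[R]_m),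
    block_mx A 0 0 B *m L = L *m intmx R C.

(* Main.v *)
Require Import Defs.
From HB Require Import structures.
From mathcomp Require Import all_boot all_order all_algebra.
From mathcomp Require Import all_classical all_reals all_analysis.
Import Order.TTheory GRing.Theory Num.Theory.
Import numFieldNormedType.Exports.
Local Open Scope ring_scope.

Set Implicit Arguments.
Section S.
Variables (R : realType) (n m : nat).
Local Notation N := (n.+1 + m.+1)%N.

Lemma intmx_mul k l p (M1 : 'M[int]_(k, l)) (M2 : 'M[int]_(l, p)) :
  intmx R (M1 *m M2) = intmx R M1 *m intmx R M2.
Proof. by rewrite /intmx map_mxM. Qed.

Lemma lat0 (L : 'M[R]_N) : lattice L 0.
Proof. exists 0; by rewrite /intmx map_mx0 mulmx0. Qed.

Lemma latD (L : 'M[R]_N) x y : lattice L x -> lattice L y -> lattice L (x + y).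
Proof.
move=> [r ->] [t ->]; exists (r + t).
by rewrite /intmx map_mxD mulmxDr.
Qed.

Lemma latZ (L : 'M[R]_N) x (k : int) : lattice L x -> lattice L (x *~ k).
Proof.
move=> [r ->]; exists (r *~ k).
by rewrite /intmx raddfMz [RHS]raddfMz.
Qed.

Lemma latM (L : 'M[R]_N) (D : 'M[R]_N) (C : 'M[int]_N) x :
  D *m L = L *m intmx R C -> lattice L x -> lattice L (D *m x).
Proof.
move=> hC [r ->]; exists (C *m r).
by rewrite mulmxA hC -mulmxA intmx_mul.
Qed.

Lemma latH (L : 'M[R]_N) (D : 'M[R]_N) (C : 'M[int]_N) (p : {poly int}) x :
  D *m L = L *m intmx R C -> lattice L x ->
  lattice L (horner_mx D (map_poly (fun z : int => z%:~R) p) *m x).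
Proof.
move=> hC; elim/poly_ind: p x => [|p c IH] x hx.
  by rewrite rmorph0 rmorph0 mul0mx; apply: lat0.
rewrite rmorphD rmorphM /= map_polyX map_polyC /= !rmorphD rmorphM /=.
rewrite horner_mx_X horner_mx_C mulmxDl -mulmxA.
apply: latD; first exact (IH _ (latM hC hx)).
have h2 := latZ c hx; rewrite -scaler_int -mul_scalar_mx in h2; exact h2.
Qed.

Lemma hornerblock (A : 'M[R]_n.+1) (B : 'M[R]_m.+1) (q : {poly R}) :
  horner_mx (block_mx A 0 0 B : 'M[R]_N) q =
  block_mx (horner_mx A q) 0 0 (horner_mx B q).
Proof.
elim/poly_ind: q => [|q c IH].
  by rewrite !rmorph0 block_mx0.
rewrite !rmorphD !rmorphM /= !horner_mx_X !horner_mx_C IH.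
rewrite -mulmxE.
rewrite (mulmx_block (horner_mx A q) 0 0 (horner_mx B q) A 0 0 B).
rewrite (scalar_mx_block n.+1 m.+1 c).
rewrite (add_block_mx (horner_mx A q *m A + 0 *m 0) (horner_mx A q *m 0 + 0 *m B)
   (0 *m A + horner_mx B q *m 0) (0 *m 0 + horner_mx B q *m B) c%:M 0 0 c%:M).
by rewrite !mulmx0 !mul0mx !addr0 !add0r.
Qed.

End S.
Unset Implicit Arguments.

Lemma kill (R : realType) (n m : nat) (L : 'M[R]_(n.+1 + m.+1))
  (P : 'M[R]_(n.+1 + m.+1)) :
  L \in unitmx -> (forall x, lattice L x -> P *m x = 0) -> P = 0.
Proof.
move=> Lu h.
have PL : P *m L = 0.
  apply/matrixP => i j.
  have lj : lattice L (col j L).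
    by exists (delta_mx j 0); rewrite /intmx map_delta_mx colE.
  have := h _ lj; rewrite colE mulmxA -colE => /(congr1 (fun M : 'cV[R]_(n.+1 + m.+1) => M i 0)).
  by rewrite !mxE => ->.
by rewrite -(mulmxK Lu P) PL mul0mx.
Qed.

Theorem lemma1 (R : realType) (n m : nat) (L : 'M[R]_(n.+1 + m.+1))
    (A : 'M[R]_n.+1) (B : 'M[R]_m.+1) (C : 'M[int]_(n.+1 + m.+1)) :
  generic_cps L ->
  self_similarity L A ->
  block_mx A 0 0 B *m L = L *m intmx R C ->
  forall p : {poly int},
    horner_mx A (map_poly (fun z : int => z%:~R) p) = 0 <->
    horner_mx B (map_poly (fun z : int => z%:~R) p) = 0.
Proof.
move=> [_ [_ [Lu [Ipar [Iperp _]]]]] _ hC p.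
set q := map_poly _ p.
have H := hornerblock A B q.
have latP x : lattice L x ->
    lattice L (horner_mx (block_mx A 0 0 B) q *m x).
  exact: (latH p hC).
have l0 := @lat0 R n m L.
have E0 : block_mx (horner_mx A q) 0 0 (horner_mx B q) = 0 ->
   horner_mx A q = 0 /\ horner_mx B q = 0.
  by rewrite -block_mx0 => /eq_block_mx [-> _ _ ->].
split => hp.
- have : horner_mx (block_mx A 0 0 B) q = 0.
    apply: (@kill R n m L _ Lu) => x lx.
    apply: Ipar => //; first exact: latP.
    rewrite /pi_par H -[x](vsubmxK x) mul_block_col col_mxKu hp !mul0mx addr0.
    by rewrite linear0.
  by rewrite H => /E0 [].
- have : horner_mx (block_mx A 0 0 B) q = 0.
    apply: (@kill R n m L _ Lu) => x lx.
    apply: Iperp => //; first exact: latP.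
    rewrite /pi_perp H -[x](vsubmxK x) mul_block_col col_mxKd hp !mul0mx addr0.
    by rewrite linear0.
  by rewrite H => /E0 [].
Qed.
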